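(* Consider the compulsory constrained two-facility location setting described in the context, with $n$ agents at locations $\mathbf{x}=(x_1,\dots,x_n)\in\mathbb{R}^n$ and alternative multiset $A=\{a_1\le a_2\le\dots\le a_m\}$, $m\ge 2$. Fix any $i\in\{1,\dots,n\}$ and let $\mathbf{x}_{(i)}$ be the $i$-th smallest entry of $\mathbf{x}$. The mechanism that, on every reported profile $\mathbf{x}$, outputs the peak of the point $\mathbf{x}_{(i)}$ in $AP$ (i.e. the pair $(a_k,a_{k+1})$ with $\mathbf{x}_{(i)}\in Z_k$) is group strategyproof.
   Context: Agents $1,\dots,n$ have private locations $x_j\in\mathbb{R}$ and each is served by both facilities $F_1,F_2$. $A=\{a_1,\dots,a_m\}$ is a multiset of real alternative locations with $a_1\le\dots\le a_m$; a feasible outcome places $F_1$ at $y_1\in A$ and $F_2$ at $y_2\in A\setminus\{y_1\}$ (removing one copy from the multiset), i.e. at most one facility per element of $A$. The cost of agent $j$ under $\mathbf{y}=(y_1,y_2)$ is $c_j(\mathbf{y},x_j)=\max\{|y_1-x_j|,|y_2-x_j|\}$. Let $AP=\{(a_1,a_2),(a_2,a_3),\dots,(a_{m-1},a_m)\}$. The zones are $Z_1=(-\infty,\frac{a_1+a_3}{2}]$, $Z_k=(\frac{a_{k-1}+a_{k+1}}{2},\frac{a_k+a_{k+2}}{2}]$ for $2\le k\le m-2$, $Z_{m-1}=(\frac{a_{m-2}+a_m}{2},\infty)$ (with $Z_1=\mathbb{R}$ if $m=2$); they partition $\mathbb{R}$, and the peak in $AP$ of a point $z\in Z_k$ is $(a_k,a_{k+1})$.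 A mechanism maps reported locations to a feasible outcome. It is group strategyproof if for every true profile $\mathbf{x}$, every nonempty $S\subseteq N$ and every misreport $\mathbf{x}'_S$, some $j\in S$ satisfies $c_j(f(\mathbf{x}),x_j)\le c_j(f(\mathbf{x}'_S,\mathbf{x}_{-S}),x_j)$. *)

(* Defs.v *)
From HB Require Import structures.
From mathcomp Require Import all_boot all_order all_algebra.
From mathcomp Require Import reals.
Set Implicit Arguments. Unset Strict Implicit. Unset Printing Implicit Defensive.
Import Order.TTheory GRing.Theory Num.Theory.
Local Open Scope ring_scope.

Section Defs.
Variable R : realType.

(* a : seq R is the sorted multiset A = {a_1 <= ... <= a_m}, 0-based: a`_0 .. a`_(m-1). *)

Definition cost (y : R * R) (xj : R) : R := Num.max `|y.1 - xj| `|y.2 - xj|.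

(* Zone Z_{k+1} of the paper (0-based index k, 0 <= k <= m-2):
   lower bound (a_{k-1}+a_{k+1})/2 < z when k > 0 (paper: k+1 >= 2),
   upper bound z <= (a_k+a_{k+2})/2 when k < m-2 (paper: k+1 <= m-2).
   For m = 2 this gives Z = R. *)
Definition in_zone (a : seq R) (k : nat) (z : R) : Prop :=
  (k < (size a).-1)%N /\
  ((0 < k)%N -> (a`_k.-1 + a`_k.+1) / 2%:R < z) /\
  ((k < (size a).-2)%N -> z <= (a`_k + a`_k.+2) / 2%:R).

Definition peak_pair (a : seq R) (k : nat) : R * R := (a`_k, a`_k.+1).

Definition order_stat (n : nat) (i : 'I_n) (x : 'I_n -> R) : R :=
  nth 0 (sort <=%R [seq x j | j <- enum 'I_n]) i.

Definition deviate (n : nat) (S : {set 'I_n}) (x' x : 'I_n -> R) : 'I_n -> R :=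
  fun j => if j \in S then x' j else x j.

Definition group_strategyproof (n : nat) (f : ('I_n -> R) -> R * R) : Prop :=
  forall (x : 'I_n -> R) (S : {set 'I_n}) (x' : 'I_n -> R),
    S != set0 ->
    exists2 j, j \in S &
      cost (f x) (x j) <= cost (f (deviate S x' x)) (x j).

End Defs.

(* Main.v *)
Require Import Defs.
From HB Require Import structures.
From mathcomp Require Import all_boot all_order all_algebra.
From mathcomp Require Import reals.
From mathcomp Require Import lra zify.
Set Implicit Arguments. Unset Strict Implicit. Unset Printing Implicit Defensive.
Import Order.TTheory GRing.Theory Num.Theory.
Local Open Scope ring_scope.

Lemma count_sorted_dc (R : realType) (P : pred R) (s : seq R) (i : nat) :
  (forall y y', y <= y' -> P y' -> P y) -> sorted <=%R s -> (i < size s)%N ->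
  (i < count P s)%N = P (nth 0 s i).
Proof.
move=> HP; elim: s i => [|y s IH] i //= Hs Hi.
have Hs' : sorted <=%R s := path_sorted Hs.
have Hall : all (fun w => y <= w) s := order_path_min le_trans Hs.
have noP : ~~ P y -> count P s = 0%N.
  move=> nPy; apply/eqP; rewrite -leqn0 leqNgt -has_count; apply/hasPn => w ws.
  apply/negP => Pw; move/allP: Hall => /(_ w ws) yw.
  by move: nPy; rewrite (HP _ _ yw Pw).
case: i Hi => [|i] Hi /=.
  case Py: (P y) => //.
  by rewrite noP ?Py.
case Py: (P y).
  by rewrite add1n ltnS IH.
rewrite noP ?Py //= ltn0; apply/esym/negP => Pn.
have : y <= nth 0 s i by apply: (allP Hall); apply: mem_nth.
by move=> /HP /(_ Pn); rewrite Py.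
Qed.

Section Main.
Variable R : realType.

Definition sx (n : nat) (x : 'I_n -> R) := sort <=%R [seq x j | j <- enum 'I_n].

Lemma count_sx n (x : 'I_n -> R) (P : pred R) :
  count (fun j => P (x j)) (enum 'I_n) = count P (sx x).
Proof.
rewrite /sx; have := (permP (permEl (perm_sort <=%R [seq x j | j <- enum 'I_n]))) P.
by move=> E; rewrite E [in RHS]count_map.
Qed.

Lemma size_sx n (x : 'I_n -> R) : size (sx x) = n.
Proof. by rewrite /sx size_sort size_map size_enum_ord. Qed.

Lemma L1 n (i : 'I_n) (x : 'I_n -> R) (t : R) :
  (i < count (fun j => (x j <= t)%R) (enum 'I_n))%N = (order_stat i x <= t).
Proof.
rewrite (count_sx x (fun y => (y <= t)%R)) count_sorted_dc //.
- by move=> y y' yy' y't; apply: le_trans y't.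
- exact: sort_le_sorted.
- by rewrite size_sx.
Qed.

Lemma L2 n (i : 'I_n) (x : 'I_n -> R) (t : R) :
  (n - i <= count (fun j => (t <= x j)%R) (enum 'I_n))%N = (t <= order_stat i x).
Proof.
have E : (count (fun j => (t <= x j)%R) (enum 'I_n) +
   count (fun j => (x j < t)%R) (enum 'I_n))%N = n.
  rewrite -[in RHS](size_enum_ord n) -(count_predC (fun j => (x j < t)%R)) addnC.
  congr addn; apply: eq_count => j /=; by rewrite leNgt.
have H := ltn_ord i.
rewrite [RHS]leNgt; have -> : (order_stat i x < t) = (i < count (fun j => (x j < t)%R) (enum 'I_n))%N.
  rewrite (count_sx x (fun y => (y < t)%R)) count_sorted_dc //.
  - by move=> y y' yy' y't; apply: le_lt_trans y't.
  - exact: sort_le_sorted.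
  - by rewrite size_sx.
apply/idP/idP => ?; lia.
Qed.
End Main.

Lemma count_gt_has (T : eqType) (P1 P2 : pred T) (s : seq T) :
  (count P2 s < count P1 s)%N -> exists2 j, j \in s & P1 j && ~~ P2 j.
Proof.
elim: s => [|y s IH] //= H.
case P1y: (P1 y); case P2y: (P2 y).
- have [j js Hj] := IH ltac:(move: H; rewrite P1y P2y /=; lia).
  by exists j => //; rewrite inE js orbT.
- by exists y; rewrite ?inE ?eqxx ?P1y ?P2y.
- have [j js Hj] := IH ltac:(move: H; rewrite P1y P2y /=; lia).
  by exists j => //; rewrite inE js orbT.
- have [j js Hj] := IH ltac:(move: H; rewrite P1y P2y /=; lia).
  by exists j => //; rewrite inE js orbT.
Qed.

Section Zones.
Variable R : realType.
Variable a : seq R.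
Hypothesis Hsorted : sorted <=%R a.

Lemma amono (p q : nat) : (p <= q)%N -> (q < size a)%N -> a`_p <= a`_q.
Proof.
move=> pq qs; apply: (sorted_leq_nth le_trans lexx 0 Hsorted) => //.
by rewrite inE; apply: leq_ltn_trans qs.
Qed.

Lemma zone_mono k k' z z' : in_zone a k z -> in_zone a k' z' -> (k < k')%N -> z < z'.
Proof.
move=> [h1 [_ h3]] [h1' [h2' _]] kk.
have hz := h3 ltac:(lia).
have hz' := h2' ltac:(lia).
have e1 : a`_k <= a`_k'.-1 by apply: amono; lia.
have e2 : a`_k.+2 <= a`_k'.+1 by apply: amono; lia.
lra.
Qed.

Lemma cost_up k k' z z' (x : R) : in_zone a k z -> in_zone a k' z' -> (k < k')%N ->
  x <= z -> cost (peak_pair a k) x <= cost (peak_pair a k') x.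
Proof.
move=> [h1 [_ h3]] [h1' [h2' _]] kk xz.
have hz := h3 ltac:(lia).
have e0 : a`_k <= a`_k.+1 by apply: amono; lia.
have e1 : a`_k.+1 <= a`_k.+2 by apply: amono; lia.
have e2 : a`_k.+2 <= a`_k'.+1 by apply: amono; lia.
rewrite /cost /peak_pair /=.
rewrite le_max; apply/orP; right.
rewrite [`|a`_k'.+1 - x|]ger0_norm; last lra.
rewrite ge_max !ler_norml; apply/andP; split; apply/andP; split; lra.
Qed.

Lemma cost_down k k' z z' (x : R) : in_zone a k z -> in_zone a k' z' -> (k' < k)%N ->
  z <= x -> cost (peak_pair a k) x <= cost (peak_pair a k') x.
Proof.
move=> [h1 [h2 _]] [h1' _] kk xz.
have hz := h2 ltac:(lia).
have e0 : a`_k <= a`_k.+1 by apply: amono; lia.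
have e1 : a`_k.-1 <= a`_k by apply: amono; lia.
have e2 : a`_k' <= a`_k.-1 by apply: amono; lia.
rewrite /cost /peak_pair /=.
rewrite le_max; apply/orP; left.
rewrite [`|a`_k' - x|]ler0_norm; last lra.
rewrite ge_max !ler_norml; apply/andP; split; apply/andP; split; lra.
Qed.
End Zones.

Theorem lemma1 (R : realType) (n : nat) (i : 'I_n) (a : seq R)
  (Hm : (2 <= size a)%N) (Hsorted : sorted <=%R a)
  (f : ('I_n -> R) -> R * R)
  (Hf : forall x : 'I_n -> R, exists k : nat,
          in_zone a k (order_stat i x) /\ f x = peak_pair a k) :
  group_strategyproof f.
Proof.
move=> x S x' /set0Pn [j0 j0S].
have [k [Hk Ek]] := Hf x.
have [k' [Hk' Ek']] := Hf (deviate S x' x).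
set y := deviate S x' x in Hk' Ek' *.
have yE : forall j, j \notin S -> y j = x j.
  by move=> j jS; rewrite /y /deviate (negbTE jS).
set z := order_stat i x in Hk.
case: (ltngtP k k') => Hkk.
- have zz := zone_mono Hsorted Hk Hk' Hkk.
  have c1 : (i < count (fun j => (x j <= z)%R) (enum 'I_n))%N by rewrite L1.
  have c2 : ~~ (i < count (fun j => (y j <= z)%R) (enum 'I_n))%N.
    by rewrite L1 -ltNge.
  have [j _ /andP [xj yj]] := count_gt_has (P1 := fun j => (x j <= z)%R)
     (P2 := fun j => (y j <= z)%R) (s := enum 'I_n) ltac:(rewrite -leqNgt in c2; exact: leq_ltn_trans c2 c1).
  have jS : j \in S.
    by apply/negPn/negP => /yE yx; move: yj; rewrite yx xj.
  exists j => //; rewrite Ek Ek'.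
  exact: (cost_up Hsorted Hk Hk' Hkk xj).
- have zz := zone_mono Hsorted Hk' Hk Hkk.
  have c1 : (n - i <= count (fun j => (z <= x j)%R) (enum 'I_n))%N by rewrite L2.
  have c2 : ~~ (n - i <= count (fun j => (z <= y j)%R) (enum 'I_n))%N.
    by rewrite L2 -ltNge.
  have [j _ /andP [xj yj]] := count_gt_has (P1 := fun j => (z <= x j)%R)
     (P2 := fun j => (z <= y j)%R) (s := enum 'I_n) ltac:(rewrite -ltnNge in c2; exact: leq_trans c2 c1).
  have jS : j \in S.
    by apply/negPn/negP => /yE yx; move: yj; rewrite yx xj.
  exists j => //; rewrite Ek Ek'.
  exact: (cost_down Hsorted Hk Hk' Hkk xj).
- by exists j0 => //; rewrite Ek Ek' Hkk.
Qed.
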